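(* Let $f:\mathbb{R}^n\to\mathbb{R}$ be differentiable and pseudo-convex, with $\nabla f$ $L$-Lipschitz continuous ($L>0$), and assume the stationary set $X^*$ is non-empty. Let $0<h<\frac{1}{L}$ and $\beta\in\left(\frac{1-\sqrt{1-h^2L^2}}{h^2L^2},1\right]$. Then the sequence $\{x^k\}$ generated by Algorithm 1 from any $x^0\in\mathbb{R}^n$ converges to a point of $X^*$.
   Context: A differentiable $f$ is pseudo-convex if $\nabla f$ is pseudo-monotone, i.e. for all $x,y$, $\langle \nabla f(x),y-x\rangle\ge 0$ implies $\langle \nabla f(y),y-x\rangle\ge0$. The stationary set is $X^*=\{x\in\mathbb{R}^n:\nabla f(x)=0\}$. Algorithm 1: given $x^0$, for $k=0,1,2,\dots$ set $z^k=x^k-h\nabla f(x^k)$ and $x^{k+1}=x^k-h\big(\nabla f(x^k)-\beta(\nabla f(x^k)-\nabla f(z^k))\big)$. *)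

(* Defs.v *)
From HB Require Import structures.
From mathcomp Require Import all_boot all_order all_algebra.
From mathcomp Require Import all_classical all_reals all_analysis.
Set Implicit Arguments. Unset Strict Implicit. Unset Printing Implicit Defensive.
Import Order.TTheory GRing.Theory Num.Theory.
Import numFieldNormedType.Exports.
Local Open Scope ring_scope.
Local Open Scope classical_set_scope.

Definition dotv (R : realType) (n : nat) (u v : 'rV[R]_n) : R :=
  \sum_(i < n) u ord0 i * v ord0 i.

Definition enorm (R : realType) (n : nat) (v : 'rV[R]_n) : R :=
  Num.sqrt (dotv v v).

(* gradient: the row vector of partial derivatives, i.e. the vector
   representing the (Frechet) differential 'd f x in the standard basis *)
Definition grad (R : realType) (n : nat) (f : 'rV[R]_n -> R^o)
  (x : 'rV[R]_n) : 'rV[R]_n :=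
  \row_(i < n) ('d f x (delta_mx ord0 i : 'rV[R]_n)).

Definition pseudo_monotone (R : realType) (n : nat)
  (F : 'rV[R]_n -> 'rV[R]_n) : Prop :=
  forall x y, 0 <= dotv (F x) (y - x) -> 0 <= dotv (F y) (y - x).

(* differentiable f is pseudo-convex iff its gradient is pseudo-monotone *)
Definition pseudo_convex (R : realType) (n : nat) (f : 'rV[R]_n -> R^o) : Prop :=
  pseudo_monotone (grad f).

Definition lipschitz_with (R : realType) (n : nat) (L : R)
  (F : 'rV[R]_n -> 'rV[R]_n) : Prop :=
  forall x y, enorm (F x - F y) <= L * enorm (x - y).

Definition stationary_set (R : realType) (n : nat) (f : 'rV[R]_n -> R^o)
  : set 'rV[R]_n := [set x | grad f x = 0].

Fixpoint alg1 (R : realType) (n : nat) (f : 'rV[R]_n -> R^o) (h beta : R)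
  (x0 : 'rV[R]_n) (k : nat) : 'rV[R]_n :=
  match k with
  | O => x0
  | S k' =>
      let xk := alg1 f h beta x0 k' in
      let zk := xk - h *: grad f xk in
      xk - h *: (grad f xk - beta *: (grad f xk - grad f zk))
  end.

(* Main.v *)
Require Import Defs.
From HB Require Import structures.
From mathcomp Require Import all_boot all_order all_algebra.
From mathcomp Require Import all_classical all_reals all_analysis.
From mathcomp Require Import ring lra.
Import Order.TTheory GRing.Theory Num.Theory.
Import numFieldNormedType.Exports.
Local Open Scope ring_scope.
Local Open Scope classical_set_scope.

Set Implicit Arguments.
Section Dot.
Context {R : realType} {n : nat}.
Implicit Types u v w : 'rV[R]_n.

Lemma dotvC u v : dotv u v = dotv v u.
Proof. by apply: eq_bigr => i _; rewrite mulrC. Qed.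
Lemma dotvDl u v w : dotv (u + v) w = dotv u w + dotv v w.
Proof. by rewrite /dotv -big_split; apply: eq_bigr => i _; rewrite mxE mulrDl. Qed.
Lemma dotvDr u v w : dotv w (u + v) = dotv w u + dotv w v.
Proof. by rewrite dotvC dotvDl !(dotvC w). Qed.
Lemma dotvZl a u v : dotv (a *: u) v = a * dotv u v.
Proof. by rewrite /dotv mulr_sumr; apply: eq_bigr => i _; rewrite mxE mulrA. Qed.
Lemma dotvZr a u v : dotv v (a *: u) = a * dotv v u.
Proof. by rewrite dotvC dotvZl dotvC. Qed.
Lemma dotvNl u v : dotv (- u) v = - dotv u v.
Proof. by rewrite -scaleN1r dotvZl mulN1r. Qed.
Lemma dotvNr u v : dotv v (- u) = - dotv v u.
Proof. by rewrite dotvC dotvNl dotvC. Qed.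
Lemma dotv0l v : dotv 0 v = 0.
Proof. by rewrite /dotv big1 // => i _; rewrite mxE mul0r. Qed.
Lemma dotv_ge0 v : 0 <= dotv v v.
Proof. by apply: sumr_ge0 => i _; rewrite -expr2 sqr_ge0. Qed.
Lemma dotv_entry v i : v ord0 i ^+ 2 <= dotv v v.
Proof.
rewrite /dotv (bigD1 i) //= -expr2 lerDl.
by apply: sumr_ge0 => j _; rewrite -expr2 sqr_ge0.
Qed.
Lemma dotv_eq0 v : dotv v v <= 0 -> v = 0.
Proof.
move=> H; apply/rowP => i; rewrite mxE; apply/eqP.
rewrite -sqrf_eq0 eq_le sqr_ge0 andbT.
exact: le_trans (dotv_entry v i) H.
Qed.
Lemma enorm_sq v : enorm v ^+ 2 = dotv v v.
Proof. by rewrite /enorm sqr_sqrtr // dotv_ge0. Qed.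
Lemma enorm_ge0 v : 0 <= enorm v.
Proof. exact: sqrtr_ge0. Qed.
Lemma dotvBl u v w : dotv (u - v) w = dotv u w - dotv v w.
Proof. by rewrite (dotvDl u (- v) w) (dotvNl v w). Qed.
Lemma dotvBr u v w : dotv w (u - v) = dotv w u - dotv w v.
Proof. by rewrite (dotvC w) dotvBl !(dotvC _ w). Qed.
Lemma sqB u v : dotv (u - v) (u - v) = dotv u u - 2 * dotv u v + dotv v v.
Proof.
rewrite (dotvBl u v) (dotvBr u v u) (dotvBr u v v) (dotvC v u); ring.
Qed.
Lemma sqZ c u : dotv (c *: u) (c *: u) = c ^+ 2 * dotv u u.
Proof. by rewrite (dotvZl c u) (dotvZr c u) mulrA expr2. Qed.
Lemma sqN u : dotv (- u) (- u) = dotv u u.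
Proof. by rewrite (dotvNl u) (dotvNr u) opprK. Qed.
Lemma mixr (r a b : 'rV[R]_n) (c : R) : dotv r (a - c *: (a - b)) = (1 - c) * dotv r a + c * dotv r b.
Proof. rewrite (dotvBr a (c *: (a - b)) r) (dotvZr c (a - b) r) (dotvBr a b r); ring. Qed.
Lemma mixsq (a b : 'rV[R]_n) (c : R) : dotv (a - c *: (a - b)) (a - c *: (a - b)) =
  (1 - c)^+2 * dotv a a + 2 * c * (1 - c) * dotv a b + c^+2 * dotv b b.
Proof.
rewrite (dotvBl a (c *: (a - b))) !mixr !(dotvZl c (a - b)) !(dotvBl a b) (dotvC b a).
ring.
Qed.
End Dot.
Lemma scal_ineq (R : realType) (h be T rr ra rb aa ab bb : R) :
  0 < h -> 0 < be -> be <= 1 -> 0 <= ra -> 0 <= rb - h * ab ->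
  bb - 2 * ab + aa <= T * aa ->
  rr - 2 * h * (1 - be) * ra - 2 * h * be * rb
   + h^+2 * ((1 - be)^+2 * aa + 2 * be * (1 - be) * ab + be^+2 * bb)
  <= rr - (2 * be - 1 - be^+2 * T) * h^+2 * aa.
Proof.
move=> h0 b0 b1 ra0 H1 H3.
have P1 : 0 <= 2 * h * (1 - be) * ra.
  apply: mulr_ge0 => //; apply: mulr_ge0; last by lra.
  by apply: mulr_ge0 => //; lra.
have P2 : 0 <= 2 * h * be * (rb - h * ab).
  apply: mulr_ge0 => //; apply: mulr_ge0; last by lra.
  by apply: mulr_ge0 => //; lra.
have P3 : 0 <= h^+2 * be^+2 * (T * aa - (bb - 2 * ab + aa)).
  by apply: mulr_ge0; [apply: mulr_ge0; apply: sqr_ge0 | lra].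
nra.
Qed.

Lemma step (R : realType) (n : nat) (f : 'rV[R]_n -> R^o) (L h be : R)
  (p x : 'rV[R]_n) :
  pseudo_convex f -> lipschitz_with L (grad f) -> 0 < L -> 0 < h ->
  0 < be -> be <= 1 -> grad f p = 0 ->
  dotv (x - h *: (grad f x - be *: (grad f x - grad f (x - h *: grad f x))) - p)
       (x - h *: (grad f x - be *: (grad f x - grad f (x - h *: grad f x))) - p)
   <= dotv (x - p) (x - p)
     - (2 * be - 1 - be^+2 * (h^+2 * L^+2)) * h^+2 * dotv (grad f x) (grad f x).
Proof.
move=> pc lip L0 h0 b0 b1 gp.
set a := grad f x.
set b := grad f (x - h *: a).
set r := x - p.
set w := a - be *: (a - b).
have E : x - h *: w - p = r - h *: w by rewrite /r addrAC.
have H2 : 0 <= dotv a r.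
  by apply: pc; rewrite gp dotv0l.
have H1 : 0 <= dotv b r - h * dotv b a.
  have : 0 <= dotv b (x - h *: a - p).
    by apply: pc; rewrite gp dotv0l.
  by rewrite addrAC -/r (dotvBr r (h *: a) b) (dotvZr h a b).
have H3 : dotv b b - 2 * dotv b a + dotv a a <= h^+2 * L^+2 * dotv a a.
  have := lip (x - h *: a) x; rewrite -/b.
  have -> : x - h *: a - x = - (h *: a) by rewrite addrAC subrr add0r.
  move=> Hl.
  have Hs : enorm (b - a) ^+ 2 <= (L * enorm (- (h *: a))) ^+ 2.
    by rewrite ler_sqr ?nnegrE ?mulr_ge0 ?enorm_ge0 // ltW.
  rewrite exprMn !enorm_sq (sqB b a) (sqN (h *: a)) (sqZ h a) in Hs.
  by move: Hs; rewrite mulrA (mulrC (L^+2)).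
rewrite E (sqB r (h *: w)) (dotvZr h w r) (sqZ h w) /w (mixr r a b be) (mixsq a b be).
clear E; clearbody w r b a.
rewrite (dotvC b r) in H1.
rewrite (dotvC a r) in H2.
rewrite (dotvC b a) in H1 H3.
have := @scal_ineq R h be (h^+2 * L^+2) (dotv r r) (dotv r a) (dotv r b) (dotv a a) (dotv a b) (dotv b b) h0 b0 b1 H2 H1 H3.
move=> H.
lra.
Qed.

Lemma sq_tri (R : realType) (n : nat) (w v : 'rV[R]_n) :
  dotv (w + v) (w + v) <= 2 * dotv w w + 2 * dotv v v.
Proof.
have H := dotv_ge0 (w - v).
rewrite (sqB w v) in H.
rewrite (dotvDl w v) (dotvDr w v w) (dotvDr w v v) (dotvC v w).
lra.
Qed.

Lemma sq_sym (R : realType) (n : nat) (u v : 'rV[R]_n) :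
  dotv (u - v) (u - v) = dotv (v - u) (v - u).
Proof. by rewrite -(opprB v u) sqN. Qed.

Lemma sq_tri' (R : realType) (n : nat) (u v : 'rV[R]_n) :
  dotv u u <= 2 * dotv (u - v) (u - v) + 2 * dotv v v.
Proof. by have := @sq_tri R n (u - v) v; rewrite subrK. Qed.

Lemma entry_le_norm (R : realType) (n : nat) (v : 'rV[R]_n) i :
  `|v ord0 i| <= `|v|.
Proof.
rewrite -[`|v|]/(mx_norm v) mx_normrE; apply/bigmax_geP; right => /=.
by exists (ord0, i).
Qed.

Lemma norm_lt_sq (R : realType) (n : nat) (v : 'rV[R]_n) eps :
  0 < eps -> dotv v v < eps ^+ 2 -> `|v| < eps.
Proof.
move=> e0 H.
rewrite -[`|v|]/(mx_norm v) mx_normrE; apply: bigmax_lt => // -[i j] _ /=.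
rewrite (ord1 i).
have H1 := dotv_entry v j.
have H2 : `|v ord0 j| ^+ 2 = v ord0 j ^+ 2 by rewrite real_normK // num_real.
have H3 := normr_ge0 (v ord0 j).
nra.
Qed.

Lemma nbhs_sq (R : realType) (n : nat) (p : 'rV[R]_n) e :
  0 < e -> nbhs p [set y | dotv (y - p) (y - p) < e].
Proof.
move=> e0; apply/nbhs_ballP.
have en : 0 < e / (n%:R + 1) by rewrite divr_gt0 // ltr_wpDl.
exists (Num.sqrt (e / (n%:R + 1))).
  by rewrite /= sqrtr_gt0.
move=> y; rewrite mx_norm_ball /ball_ /= => Hy.
apply: (@le_lt_trans _ _ (\sum_(i < n) (e / (n%:R + 1)))).
  apply: ler_sum => i _.
  have := @entry_le_norm _ _ (p - y) i.
  rewrite !mxE => Hi.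
  have Hi2 : `|p ord0 i - y ord0 i| < Num.sqrt (e / (n%:R + 1)) by exact: le_lt_trans Hi Hy.
  have Hs : Num.sqrt (e / (n%:R + 1)) ^+ 2 = e / (n%:R + 1) by rewrite sqr_sqrtr // ltW.
  have Hn : `|p ord0 i - y ord0 i| ^+ 2 = (p ord0 i - y ord0 i) ^+ 2 by rewrite real_normK // num_real.
  have := normr_ge0 (p ord0 i - y ord0 i).
  rewrite -expr2.
  nra.
rewrite sumr_const card_ord -mulr_natl.
rewrite -[_ *+ n]mulr_natr mulrAC ltr_pdivrMr ?ltr_wpDl //.
have : 0 <= (n%:R : R) by [].
nra.
Qed.

Lemma c_pos (R : realType) (L h be : R) :
  0 < L -> 0 < h -> h < L^-1 ->
  (1 - Num.sqrt (1 - h ^+ 2 * L ^+ 2)) / (h ^+ 2 * L ^+ 2) < be -> be <= 1 ->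
  0 < 2 * be - 1 - be^+2 * (h^+2 * L^+2).
Proof.
move=> L0 h0 hL hb b1.
set T := h ^+ 2 * L ^+ 2 in hb *.
have hL1 : h * L < 1 by rewrite -ltr_pdivlMr // div1r.
have T0 : 0 < T by rewrite /T mulr_gt0 // exprn_gt0.
have T1 : T < 1.
  rewrite /T -exprMn; have := mulr_gt0 h0 L0; nra.
set s := Num.sqrt (1 - T) in hb.
have s0 : 0 <= s := sqrtr_ge0 _.
have s2 : s ^+ 2 = 1 - T by rewrite sqr_sqrtr // subr_ge0 ltW.
rewrite ltr_pdivrMr // in hb.
have H1 : 0 < be * T - 1 + s by lra.
have H2 : 0 < 1 - be * T by nra.
have H3 : 0 < s - (1 - be * T) by lra.
have H4 : 0 < (s - (1 - be * T)) * (s + (1 - be * T)) by apply: mulr_gt0 => //; lra.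
have H5 : 0 < T * (2 * be - 1 - be^+2 * T) by nra.
by rewrite pmulr_rgt0 in H5.
Qed.

Lemma fin_arith (R : realType) (s A B q L : R) : 0 < s -> B < s / 8 ->
  q * (8 * L^+2) < s -> A <= L^+2 * q -> s <= 2 * A + 2 * B -> False.
Proof. move=> *; lra. Qed.

Unset Implicit Arguments.

Theorem theorem1 (R : realType) (n : nat) (f : 'rV[R]_n -> R^o) (L h beta : R)
  (x0 : 'rV[R]_n) :
  (forall x, differentiable f x) ->
  pseudo_convex f ->
  0 < L ->
  lipschitz_with L (grad f) ->
  stationary_set f !=set0 ->
  0 < h -> h < L^-1 ->
  (1 - Num.sqrt (1 - h ^+ 2 * L ^+ 2)) / (h ^+ 2 * L ^+ 2) < beta ->
  beta <= 1 ->
  exists2 xs, stationary_set f xs &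
    alg1 f h beta x0 @ \oo --> xs.
Proof.
move=> _ pc L0 lip [p0 gp0] h0 hL hb b1.
have c0 := @c_pos R L h beta L0 h0 hL hb b1.
set c := 2 * beta - 1 - beta^+2 * (h^+2 * L^+2) in c0.
have b0 : 0 < beta.
  have := sqr_ge0 beta; have := mulr_ge0 (sqr_ge0 h) (sqr_ge0 L); rewrite /c in c0; nra.
set x := alg1 f h beta x0.
have xS k : x k.+1 = x k - h *: (grad f (x k) - beta *: (grad f (x k)
    - grad f (x k - h *: grad f (x k)))) by [].
pose V p k := dotv (x k - p) (x k - p).
have dec p : grad f p = 0 -> forall k,
    V p k.+1 <= V p k - c * h^+2 * dotv (grad f (x k)) (grad f (x k)).
  by move=> gp k; rewrite /V xS; exact: step.
have gsq_ge0 k : 0 <= c * h^+2 * dotv (grad f (x k)) (grad f (x k)).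
  by rewrite mulr_ge0 ?dotv_ge0 // mulr_ge0 ?sqr_ge0 // ltW.
have mono p : grad f p = 0 -> forall k j, (k <= j)%N -> V p j <= V p k.
  move=> gp k j /subnK <-; elim: (j - k)%N => [|m IH]; first by rewrite add0n.
  rewrite addSn; apply: le_trans (dec p gp _) _; have := gsq_ge0 (m + k)%N; lra.
set M := Num.sqrt (V p0 0%N).
have bnd k i : `|x k ord0 i - p0 ord0 i| <= M.
  rewrite -sqrtr_sqr ler_sqrt ?dotv_ge0 //.
  have := dotv_entry (x k - p0) i; rewrite !mxE => H.
  exact: le_trans H (mono p0 gp0 0%N k (leq0n k)).
pose S := [set v : 'rV[R]_n | forall i,
  `[p0 ord0 i - M, p0 ord0 i + M]%classic (v ord0 i)].
have cS : compact S.
  apply: (@rV_compact _ n (fun i => `[p0 ord0 i - M, p0 ord0 i + M]%classic)).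
  by move=> i; exact: segment_compact.
have FS : (x @ \oo) S.
  exists 0%N => // k _ i /=; rewrite in_itv /=.
  have := bnd k i; rewrite ler_norml => /andP[H1 H2]; apply/andP; split; lra.
have [xb [_ clx]] := cS _ _ FS.
have clk N B : nbhs xb B -> exists k, (N <= k)%N /\ B (x k).
  move=> nB.
  have FA : (x @ \oo) [set y | exists k, (N <= k)%N /\ y = x k].
    by exists N => // k /= Nk; exists k.
  have [y [[k [Nk ->]] By]] := clx _ _ FA nB.
  by exists k.
pose E := range (V p0).
have hinf : has_inf E.
  split; first by exists (V p0 0%N); exists 0%N.
  by exists 0 => y [k _ <-]; exact: dotv_ge0.
have small d : 0 < d -> exists N, forall k, (N <= k)%N ->
    c * h^+2 * dotv (grad f (x k)) (grad f (x k)) < d.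
  move=> d0; have [e [N _ <-] He] := inf_adherent d0 hinf.
  exists N => k Nk.
  have := dec p0 gp0 k; have := mono p0 gp0 N k Nk.
  have : inf E <= V p0 k.+1 by apply: (ge_inf (proj2 hinf)); exists k.+1.
  lra.
have gxb : grad f xb = 0.
  apply: dotv_eq0; rewrite leNgt; apply/negP => s0.
  have K0 : 0 < c * h^+2 by rewrite mulr_gt0 // exprn_gt0.
  have [N HN] := small (c * h^+2 * ((dotv (grad f xb) (grad f xb)) / 8)) (mulr_gt0 K0 (divr_gt0 s0 (ltr0n _ 8))).
  have L2 : 0 < 8 * L^+2 by rewrite mulr_gt0 // exprn_gt0.
  have [k [Nk Bk]] := clk N _ (@nbhs_sq R n xb _ (divr_gt0 s0 L2)).
  have H1 := HN k Nk; rewrite ltr_pM2l // in H1.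
  rewrite /= ltr_pdivlMr // in Bk.
  have H2 : dotv (grad f xb - grad f (x k)) (grad f xb - grad f (x k))
      <= L^+2 * dotv (x k - xb) (x k - xb).
    have Hl := lip xb (x k).
    have Hs : enorm (grad f xb - grad f (x k)) ^+ 2 <= (L * enorm (xb - x k)) ^+ 2.
      rewrite ler_sqr ?nnegrE; [exact: Hl | exact: enorm_ge0 |].
      exact: mulr_ge0 (ltW L0) (enorm_ge0 _).
    rewrite exprMn !enorm_sq (@sq_sym R n xb (x k)) in Hs.
    exact: Hs.
  have H3 := @sq_tri' R n (grad f xb) (grad f (x k)).
  exact: (@fin_arith R _ _ _ _ _ s0 H1 Bk H2 H3).
exists xb; first exact: gxb.
apply/cvgrPdist_lt => eps e0.
have [k [_ Bk]] := clk 0%N _ (@nbhs_sq R n xb _ (exprn_gt0 2 e0)).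
exists k => // j /= kj.
apply: (@norm_lt_sq R n) => //.
rewrite (@sq_sym R n xb (x j)).
exact: le_lt_trans (mono xb gxb k j kj) Bk.
Qed.
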